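(* Let $f\colon 2^{\mathcal{N}}\to\mathbb{R}$ be non-negative and submodular, $k$ a positive integer, $t_s\in[0,1]$, $c=\lceil t_s k\rceil$, $\alpha=1-1/k$, and $Z\subseteq\mathcal{N}$. Assume $\mathcal{N}\setminus Z$ contains at least $2k$ dummy elements (elements $d$ with $f(A\cup\{d\})=f(A)$ for all $A$). Consider the random sets $S_0,\dots,S_k$ produced by the Guided Random Greedy procedure defined below, and let $\mathrm{OPT}\in\arg\max\{f(T):|T|\le k\}$. Then for every integer $1\le i\le c$, \[ \mathbb{E}[f(S_i)]\ \ge\ (1-\alpha^i)\,f(\mathrm{OPT}\setminus Z)-\Big(1-\alpha^i-\tfrac{i}{k}\alpha^{i-1}\Big) f(\mathrm{OPT}\cup Z)+\alpha^i f(S_0), \] and for every integer $c+1\le i\le k$, \[ \mathbb{E}[f(S_i)]\ \ge\ \frac{i-c}{k}\,\alpha^{i-c-1} f(\mathrm{OPT})-\frac{i-c}{k}\big(\alpha^{i-c-1}-\alpha^{i-1}\big) f(\mathrm{OPT}\cup Z). \]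
   Context: Guided Random Greedy: set $S_0=\emptyset$. For $i=1,\dots,c$: let $M_i\subseteq\mathcal{N}\setminus(S_{i-1}\cup Z)$ be a set of size $k$ maximizing $\sum_{u\in M_i}\big(f(S_{i-1}\cup\{u\})-f(S_{i-1})\big)$; pick $u_i$ uniformly at random from $M_i$ and set $S_i=S_{i-1}\cup\{u_i\}$. For $i=c+1,\dots,k$: do the same but with $M_i\subseteq\mathcal{N}\setminus S_{i-1}$ (elements of $Z$ allowed). Submodularity: $f(A\cup\{s\})-f(A)\ge f(B\cup\{s\})-f(B)$ for $A\subseteq B$, $s\notin B$; non-negativity: $f\ge0$. *)

(* Defs.v *)
From HB Require Import structures.
From mathcomp Require Import all_boot all_order all_algebra.
Set Implicit Arguments. Unset Strict Implicit. Unset Printing Implicit Defensive.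
Import Order.TTheory GRing.Theory Num.Theory.
Local Open Scope ring_scope.

Section GRG.
Variables (R : archiRealFieldType) (T : finType).

Definition nonneg_fun (f : {set T} -> R) := forall A, 0 <= f A.

Definition submodular (f : {set T} -> R) :=
  forall (A B : {set T}) (s : T), A \subset B -> s \notin B ->
    f (s |: B) - f B <= f (s |: A) - f A.

Definition dummy (f : {set T} -> R) (d : T) := forall A : {set T}, f (d |: A) = f A.

Definition marg (f : {set T} -> R) (S : {set T}) (u : T) := f (u |: S) - f S.

(* The set S_{i-1} determined by the history of chosen elements u_1..u_{i-1}. *)
Definition setof (h : seq T) : {set T} := [set x in h].

(* [sel] is a (history-dependent, arbitrary tie-breaking) choice rule for M_i
   in Guided Random Greedy: at step i = size h + 1 it returns a set of size k
   inside N \ (S_{i-1} ∪ Z) if i <= c, inside N \ S_{i-1} otherwise,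
   maximizing the sum of marginal gains over all such sets. *)
Definition grg_valid_M (f : {set T} -> R) (k c : nat) (Z : {set T})
  (h : seq T) (M : {set T}) :=
  let S := setof h in
  let allowed := if ((size h).+1 <= c)%N then ~: (S :|: Z) else ~: S in
  [/\ #|M| = k, M \subset allowed &
      forall M' : {set T}, #|M'| = k -> M' \subset allowed ->
        \sum_(u in M') marg f S u <= \sum_(u in M) marg f S u].

Definition grg_selector (f : {set T} -> R) (k c : nat) (Z : {set T})
  (sel : seq T -> {set T}) :=
  forall h : seq T, (size h < k)%N -> grg_valid_M f k c Z h (sel h).

(* Expected value of f(S_{|h| + m}) given history h, where each step picks
   u uniformly at random from the k-element set sel h. *)
Fixpoint grg_exp (f : {set T} -> R) (k : nat) (sel : seq T -> {set T})
  (m : nat) (h : seq T) : R :=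
  match m with
  | 0 => f (setof h)
  | m'.+1 => (k%:R)^-1 * \sum_(u in sel h) grg_exp f k sel m' (rcons h u)
  end.

Definition grg_E (f : {set T} -> R) (k : nat) (sel : seq T -> {set T}) (i : nat) : R :=
  grg_exp f k sel i [::].

End GRG.

(* Main.v *)
Require Import Defs.
From HB Require Import structures.
From mathcomp Require Import all_boot all_order all_algebra.
From mathcomp Require Import ring lra zify.
Import Order.TTheory GRing.Theory Num.Theory.
Local Open Scope ring_scope.

Section Aux.
Variables (R : archiRealFieldType) (T : finType) (f : {set T} -> R).
Hypothesis fsub : submodular f.

Lemma marg_mono (A B : {set T}) x : A \subset B -> (x \in B -> x \in A) ->
  marg f B x <= marg f A x.
Proof.
move=> AB hx; rewrite /marg.
case xB: (x \in B).
  have xA := hx xB.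
  by rewrite (setUidPr (_ : [set x] \subset B)) ?sub1set //
     (setUidPr (_ : [set x] \subset A)) ?sub1set // !subrr.
by apply: fsub => //; rewrite xB.
Qed.

Lemma sum_marg (A M : {set T}) : f (A :|: M) - f A <= \sum_(u in M) marg f A u.
Proof.
move: {2}#|M| (erefl #|M|) => n; elim: n M => [|n IH] M cM.
  have -> : M = set0 by apply/eqP; rewrite -cards_eq0 cM.
  by rewrite big_set0 setU0 subrr.
have [x xM]: exists x, x \in M by apply/set0Pn; rewrite -card_gt0 cM.
rewrite (big_setD1 x xM) /=.
have cM' : #|M :\ x| = n by move: cM; rewrite (cardsD1 x M) xM; case.
have H1 := IH _ cM'.
have eM : A :|: M = x |: (A :|: (M :\ x)) by rewrite setUCA setD1K.
have H2 : marg f (A :|: (M :\ x)) x <= marg f A x.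
  apply: marg_mono; first exact: subsetUl.
  by rewrite !inE eqxx /= orbF.
move: H2; rewrite {1}/marg -eM => H2.
lra.
Qed.

Lemma set_marg (A B X : {set T}) : A \subset B ->
  (forall x, x \in X -> x \in B -> x \in A) ->
  f (B :|: X) - f B <= f (A :|: X) - f A.
Proof.
move=> AB; move: {2}#|X| (erefl #|X|) => n; elim: n X => [|n IH] X cX hX.
  have -> : X = set0 by apply/eqP; rewrite -cards_eq0 cX.
  by rewrite !setU0 !subrr.
have [x xX]: exists x, x \in X by apply/set0Pn; rewrite -card_gt0 cX.
have cX' : #|X :\ x| = n by move: cX; rewrite (cardsD1 x X) xX; case.
have H1 : f (B :|: (X :\ x)) - f B <= f (A :|: (X :\ x)) - f A.
  apply: IH => // y; rewrite !inE => /andP[_ yX]; exact: hX.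
have eB : B :|: X = x |: (B :|: (X :\ x)) by rewrite setUCA setD1K.
have eA : A :|: X = x |: (A :|: (X :\ x)) by rewrite setUCA setD1K.
have H2 : marg f (B :|: (X :\ x)) x <= marg f (A :|: (X :\ x)) x.
  apply: marg_mono; first exact: setSU.
  rewrite !inE eqxx /= !orbF => xB; by rewrite (hX x xX xB).
move: H2; rewrite /marg -eA -eB => H2.
lra.
Qed.

End Aux.
Section Ex.
Variables (R : archiRealFieldType) (T : finType) (f : {set T} -> R).
Variables (k c : nat) (Z : {set T}) (sel : seq T -> {set T}) (D : {set T}).
Hypothesis fsub : submodular f.
Hypothesis fnn : nonneg_fun f.
Hypothesis kpos : (0 < k)%N.
Hypothesis Hsel : grg_selector f k c Z sel.
Hypothesis DZ : D \subset ~: Z.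
Hypothesis Dcard : (2 * k <= #|D|)%N.
Hypothesis Ddum : forall d, d \in D -> dummy f d.

Fixpoint Ex (m : nat) (h : seq T) (g : seq T -> R) : R :=
  match m with
  | 0 => g h
  | m'.+1 => (k%:R)^-1 * \sum_(u in sel h) Ex m' (rcons h u) g
  end.

Lemma grg_exp_Ex m h : grg_exp f k sel m h = Ex m h (fun h => f (setof h)).
Proof.
elim: m h => [|m IH] h //=; congr (_ * _); apply: eq_bigr => u _; exact: IH.
Qed.

Lemma Ex_step m h g : Ex m.+1 h g =
  Ex m h (fun h' => (k%:R)^-1 * \sum_(u in sel h') g (rcons h' u)).
Proof.
elim: m h => [|m IH] h; first by [].
transitivity ((k%:R)^-1 * \sum_(u in sel h) Ex m.+1 (rcons h u) g); first by [].
rewrite [RHS]/=; congr (_ * _); apply: eq_bigr => u _; exact: IH.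
Qed.

Lemma card_sel h : (size h < k)%N -> #|sel h| = k.
Proof. by move=> /Hsel [->]. Qed.

Lemma Ex_affine m h a b d g1 g2 : (size h + m <= k)%N ->
  Ex m h (fun x => a * g1 x + b * g2 x + d) = a * Ex m h g1 + b * Ex m h g2 + d.
Proof.
elim: m h => [|m IH] h hs /=; first by [].
have hk : (size h < k)%N by move: hs; rewrite addnS; apply: leq_trans; rewrite ltnS leq_addr.
rewrite (eq_bigr (fun u => a * Ex m (rcons h u) g1 + b * Ex m (rcons h u) g2 + d));
  last by move=> u _; rewrite IH // size_rcons addSnnS.
rewrite !big_split /= -!mulr_sumr sumr_const card_sel // -mulr_natr.
have k0 : (k%:R : R) != 0 by rewrite pnatr_eq0 -lt0n.
by field.
Qed.

Lemma setof_nil : @setof T [::] = (set0 : {set T}).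
Proof. by apply/setP => x; rewrite !inE. Qed.

Lemma setof_rcons (h : seq T) (u : T) : setof (rcons h u) = u |: setof h.
Proof. by apply/setP => x; rewrite !inE mem_rcons in_cons. Qed.

Definition Inv (h : seq T) := (size h <= k)%N && ((size h <= c)%N ==> (setof h :&: Z == set0)).

Lemma Inv_step h u : Inv h -> (size h < k)%N -> u \in sel h -> Inv (rcons h u).
Proof.
move=> /andP[_ hz] hk uM; rewrite /Inv size_rcons hk /=.
apply/implyP => hc.
have := Hsel _ hk; case=> _ sub _.
move: sub; rewrite hc => /subsetP /(_ _ uM); rewrite !inE negb_or => /andP[_ uZ].
move: hz; rewrite (leq_trans (leqnSn _) hc) /= => /eqP hz.
apply/eqP/setP => x; rewrite setof_rcons !inE.
case: (x =P u) => [->|_] /=; first by rewrite (negbTE uZ).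
by have := congr1 (fun S : {set T} => x \in S) hz; rewrite !inE.
Qed.

Lemma Ex_le m h g1 g2 : Inv h -> (size h + m <= k)%N ->
  (forall h', Inv h' -> size h' = (size h + m)%N -> g1 h' <= g2 h') ->
  Ex m h g1 <= Ex m h g2.
Proof.
elim: m h => [|m IH] h ih hs H /=; first by apply: H; rewrite ?addn0.
have hk : (size h < k)%N by move: hs; rewrite addnS; apply: leq_trans; rewrite ltnS leq_addr.
apply: ler_wpM2l; first by rewrite invr_ge0 ler0n.
apply: ler_sum => u uM; apply: IH.
- exact: Inv_step.
- by rewrite size_rcons addSnnS.
- by move=> h' ih' e; apply: H => //; rewrite e size_rcons addSnnS.
Qed.

Lemma sum_f_step h A : (size h < k)%N ->
  \sum_(u in sel h) f (u |: A) = f A * k%:R + \sum_(u in sel h) marg f A u.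
Proof.
move=> hk; rewrite /marg sumrB sumr_const card_sel // -[f A *+ k]mulr_natr.
by rewrite addrC subrK.
Qed.

Definition allowed (h : seq T) :=
  if ((size h).+1 <= c)%N then ~: (setof h :|: Z) else ~: setof h.

Lemma sel_bound h (X : {set T}) : (size h < k)%N -> (#|X| <= k)%N ->
  (forall x, x \in X -> x \notin setof h -> x \in allowed h) ->
  f (setof h :|: X) - f (setof h) <= \sum_(u in sel h) marg f (setof h) u.
Proof.
move=> hk cX hX.
set S := setof h.
set Y := X :\: S.
set P := D :\: (S :|: Y).
set n := (k - #|Y|)%N.
set Q := [set x in take n (enum P)].
have cS : (#|S| <= size h)%N by rewrite /S /setof cardsE card_size.
have cY : (#|Y| <= #|X|)%N by apply: subset_leq_card; apply: subsetDl.
have cP : (n <= #|P|)%N.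
  rewrite /P cardsD.
  have h1 : (#|D :&: (S :|: Y)| <= #|S :|: Y|)%N by apply: subset_leq_card; apply: subsetIr.
  have h2 : (#|S :|: Y| <= #|S| + #|Y|)%N by rewrite cardsU leq_subr.
  rewrite /n; lia.
have cQ : #|Q| = n.
  rewrite /Q cardsE; have /card_uniqP -> := take_uniq n (enum_uniq P).
  by rewrite size_takel // -cardE.
have QP : Q \subset P by apply/subsetP => x; rewrite inE => /mem_take; rewrite mem_enum.
have YQ : Y :&: Q = set0.
  apply/setP => x; rewrite in_setI in_set0; apply/negbTE/negP => /andP[xY xQ].
  by move: (subsetP QP x xQ); rewrite in_setD in_setU xY orbT.
have cM : #|Y :|: Q| = k by rewrite cardsU YQ cards0 cQ /n; lia.
have Mal : Y :|: Q \subset allowed h.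
  apply/subsetP => x; rewrite inE => /orP[|xQ].
    by rewrite inE => /andP[xS xX]; apply: hX.
  have := subsetP QP x xQ; rewrite !inE negb_or => /andP[/andP[xS _] xD].
  have := subsetP DZ x xD; rewrite inE => xZ.
  by rewrite /allowed; case: ifP; rewrite !inE ?negb_or ?xS ?xZ.
have [_ _ opt] := Hsel _ hk.
have := opt _ cM; rewrite -/S => /(_ Mal) Hs.
apply: le_trans Hs.
rewrite (eq_bigl [predU Y & Q]); last by move=> x; rewrite !inE.
rewrite bigU /=; last by rewrite -setI_eq0 YQ.
rewrite [E in _ <= _ + E]big1 ?addr0; last first.
  move=> u uQ; have := subsetP QP u uQ; rewrite inE => /andP[_ uD].
  by rewrite /marg Ddum // subrr.
have -> : S :|: X = S :|: Y.
  by apply/setP => x; rewrite /Y !in_setU in_setD; case: (x \in S).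
exact: sum_marg.
Qed.


Lemma Inv_nil : Inv [::].
Proof. by rewrite /Inv /= setof_nil set0I eqxx. Qed.

Lemma kR0 : (k%:R : R) != 0.
Proof. by rewrite pnatr_eq0 -lt0n. Qed.

Lemma kRgt0 : (0 : R) < k%:R.
Proof. by rewrite ltr0n. Qed.

Lemma step_W h W : (size h < k)%N ->
  (1 - (k%:R)^-1) * f (setof h :|: W) <=
  (k%:R)^-1 * \sum_(u in sel h) f (setof (rcons h u) :|: W).
Proof.
move=> hk.
rewrite (eq_bigr (fun u => f (u |: (setof h :|: W)))); last first.
  by move=> u _; rewrite setof_rcons setUA.
rewrite sum_f_step //.
have H1 := @sum_marg _ _ f fsub (setof h :|: W) (sel h).
have H2 := fnn (setof h :|: W :|: sel h).
have k0 := kR0.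
rewrite -[X in X <= _](_ : (k%:R)^-1 * (f (setof h :|: W) * k%:R - f (setof h :|: W)) = _); last by field.
apply: ler_wpM2l; first by rewrite invr_ge0 ler0n.
lra.
Qed.

Lemma step_X h (X : {set T}) : (size h < k)%N -> (#|X| <= k)%N ->
  (forall x, x \in X -> x \notin setof h -> x \in allowed h) ->
  (1 - (k%:R)^-1) * f (setof h) + (k%:R)^-1 * f (setof h :|: X) <=
  (k%:R)^-1 * \sum_(u in sel h) f (setof (rcons h u)).
Proof.
move=> hk cX hX.
rewrite (eq_bigr (fun u => f (u |: setof h))); last by move=> u _; rewrite setof_rcons.
rewrite sum_f_step //.
have H1 := @sel_bound h X hk cX hX.
have k0 := kR0.
rewrite -[E in E <= _](_ : (k%:R)^-1 * (f (setof h) * k%:R - f (setof h) + f (setof h :|: X)) = _); last by field.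
apply: ler_wpM2l; first by rewrite invr_ge0 ler0n.
lra.
Qed.

Definition gW (W : {set T}) := fun h : seq T => f (setof h :|: W).

Lemma Ex0W W : Ex 0 [::] (gW W) = f W.
Proof. by rewrite /= /gW setof_nil set0U. Qed.

Lemma F1gen W j l : (j + l <= k)%N ->
  (1 - (k%:R)^-1) ^+ l * Ex j [::] (gW W) <= Ex (j + l) [::] (gW W).
Proof.
elim: l => [|l IH] hl; first by rewrite expr0 mul1r addn0.
have hl' : (j + l <= k)%N by apply: leq_trans hl; rewrite addnS.
have a0 : 0 <= 1 - (k%:R : R)^-1.
  by rewrite subr_ge0 invf_le1 ?ltr0n // ler1n.
apply: le_trans (_ : (1 - (k%:R)^-1) * Ex (j + l) [::] (gW W) <= _).
  rewrite exprS -mulrA; exact: ler_wpM2l (IH hl').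
rewrite addnS Ex_step.
have -> : (1 - (k%:R)^-1) * Ex (j + l) [::] (gW W) =
   Ex (j + l) [::] (fun x => (1 - (k%:R)^-1) * gW W x + 0 * gW W x + 0).
  by rewrite Ex_affine // mul0r !addr0.
apply: Ex_le => //; first exact: Inv_nil.
move=> h' _ e; rewrite mul0r !addr0 /gW.
apply: step_W; rewrite e /=; lia.
Qed.


Definition fS := fun h : seq T => f (setof h).

Lemma a_ge0 : 0 <= 1 - (k%:R : R)^-1.
Proof. by rewrite subr_ge0 invf_le1 ?ltr0n // ler1n. Qed.

Lemma Inv_disj h : Inv h -> (size h <= c)%N -> forall x, x \in setof h -> x \notin Z.
Proof.
move=> /andP[_ hz] hc x xS; move: hz; rewrite hc /= => /eqP hz.
apply/negP => xZ.
by have := congr1 (fun S : {set T} => x \in S) hz; rewrite in_setI xS xZ in_set0.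
Qed.

Lemma phase1_rec (OPT : {set T}) j : (#|OPT| <= k)%N -> (j < c)%N -> (j < k)%N ->
  (1 - (k%:R)^-1) * Ex j [::] fS + (k%:R)^-1 * (f (OPT :\: Z) - f (OPT :|: Z)
     + (1 - (k%:R)^-1)^+j * f (OPT :|: Z)) <= Ex j.+1 [::] fS.
Proof.
move=> cO jc jk.
set a := 1 - (k%:R : R)^-1.
set B := OPT :|: Z. set G := OPT :\: Z.
have HB : a^+j * f B <= Ex j [::] (gW B).
  by have := @F1gen B 0 j; rewrite Ex0W add0n; apply; apply: ltnW.
apply: le_trans (_ : a * Ex j [::] fS + (k%:R)^-1 * Ex j [::] (gW B)
                      + (k%:R)^-1 * (f G - f B) <= _).
  have : (k%:R)^-1 * (a^+j * f B) <= (k%:R)^-1 * Ex j [::] (gW B).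
    by apply: ler_wpM2l; rewrite ?invr_ge0 ?ler0n.
  lra.
rewrite -(@Ex_affine j [::] a (k%:R)^-1 ((k%:R)^-1 * (f G - f B)) fS (gW B)); last exact: ltnW.
rewrite Ex_step; apply: Ex_le; [exact: Inv_nil| exact: ltnW|].
move=> h ih /= e.
have hk : (size h < k)%N by rewrite e.
have H1 := @step_X h G hk (leq_trans (subset_leq_card (subsetDl OPT Z)) cO).
have H2 := @set_marg _ _ f fsub G B (setof h).
have hc : (size h <= c)%N by rewrite e add0n ltnW.
have hd := @Inv_disj h ih hc.
have [] : G \subset B /\ (forall x, x \in setof h -> x \in B -> x \in G).
  split; first exact: subset_trans (subsetDl OPT Z) (subsetUl OPT Z).
  move=> x xS; rewrite in_setU in_setD (negbTE (hd x xS)) orbF /=.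
  by move=> ->.
move=> s1 s2; move: (H2 s1 s2) => {}H2.
have : (forall x, x \in G -> x \notin setof h -> x \in allowed h).
  move=> x; rewrite /allowed e add0n jc in_setD => /andP[xZ _] xS.
  by rewrite in_setC in_setU negb_or xS xZ.
move/H1 => {}H1.
rewrite /gW /fS [B :|: _]setUC [G :|: _]setUC in H2 *.
have H3 : (k%:R : R)^-1 * (f (setof h :|: B) - f B) <= (k%:R)^-1 * (f (setof h :|: G) - f G) by apply: ler_wpM2l; rewrite ?invr_ge0 ?ler0n.
rewrite /a; lra.
Qed.

Lemma phase2_rec (OPT : {set T}) j : (#|OPT| <= k)%N -> (c <= j)%N -> (j < k)%N ->
  (1 - (k%:R)^-1) * Ex j [::] fS + (k%:R)^-1 * Ex j [::] (gW OPT) <= Ex j.+1 [::] fS.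
Proof.
move=> cO cj jk.
rewrite -[X in X <= _]addr0 -(@Ex_affine j [::] (1 - (k%:R)^-1) (k%:R)^-1 0 fS (gW OPT)); last exact: ltnW.
rewrite Ex_step; apply: Ex_le; [exact: Inv_nil| exact: ltnW|].
move=> h ih /= e.
have hk : (size h < k)%N by rewrite e.
have H1 := @step_X h OPT hk cO.
have : (forall x, x \in OPT -> x \notin setof h -> x \in allowed h).
  move=> x; rewrite /allowed e add0n ltnNge cj /= => _ xS.
  by rewrite in_setC.
move/H1 => {}H1.
rewrite /gW /fS addr0; exact: H1.
Qed.

Lemma phase2_base (OPT : {set T}) : (c <= k)%N ->
  (1 - (k%:R)^-1)^+c * f (OPT :|: Z) + f OPT - f (OPT :|: Z) <= Ex c [::] (gW OPT).
Proof.
move=> ck.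
set a := 1 - (k%:R : R)^-1.
set B := OPT :|: Z.
have HB : a^+c * f B <= Ex c [::] (gW B).
  by have := @F1gen B 0 c; rewrite Ex0W add0n; apply.
apply: le_trans (_ : 1 * Ex c [::] (gW B) + 0 * Ex c [::] (gW B) + (f OPT - f B) <= _).
  lra.
rewrite -(@Ex_affine c [::] 1 0 (f OPT - f B) (gW B) (gW B)) //.
apply: Ex_le => //; first exact: Inv_nil.
move=> h ih /= e.
have H2 := @set_marg _ _ f fsub OPT B (setof h).
have hc : (size h <= c)%N by rewrite e add0n.
have hd := @Inv_disj h ih hc.
have [] : OPT \subset B /\ (forall x, x \in setof h -> x \in B -> x \in OPT).
  split; first exact: subsetUl.
  move=> x xS; rewrite in_setU (negbTE (hd x xS)) orbF.
  by [].
move=> s1 s2; move: (H2 s1 s2) => {}H2.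
rewrite /gW [B :|: _]setUC [OPT :|: setof h]setUC in H2 *.
lra.
Qed.

Lemma Ex_ge0 j : (j <= k)%N -> 0 <= Ex j [::] fS.
Proof.
move=> jk.
apply: le_trans (_ : 0 * Ex j [::] fS + 0 * Ex j [::] fS + 0 <= _); first lra.
rewrite -(@Ex_affine j [::] 0 0 0 fS fS) //; apply: Ex_le => //; first exact: Inv_nil.
by move=> h _ _; rewrite !mul0r !addr0; apply: fnn.
Qed.

End Ex.

Section Alg.
Variable R : archiRealFieldType.

Lemma part1_alg (e : nat -> R) (a kR fG F f0 : R) c :
  a = 1 - kR^-1 -> kR != 0 -> 0 <= a -> e 0%N = f0 ->
  (forall i, (i < c)%N -> a * e i + kR^-1 * (fG - F + a^+i * F) <= e i.+1) ->
  forall i, (i <= c)%N ->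
   (1 - a^+i) * fG - (1 - a^+i - i%:R / kR * a^+i.-1) * F + a^+i * f0 <= e i.
Proof.
move=> Ha k0 a0 e0 H; elim=> [|i IH] hi.
  rewrite expr0 e0 mul0r; lra.
have H1 := H i hi.
have H2 := ler_wpM2l a0 (IH (ltnW hi)).
set L := (X in X <= _).
have -> : L = a * ((1 - a^+i) * fG - (1 - a^+i - i%:R / kR * a^+i.-1) * F + a^+i * f0)
              + kR^-1 * (fG - F + a^+i * F).
  rewrite /L; case: (i) => [|n] /=.
    rewrite !exprS !expr0 Ha; field => //.
  rewrite !exprS; move: (a ^+ n) => p; rewrite !mulrS Ha; field => //.
lra.
Qed.

Lemma part2_alg (e : nat -> R) (a kR fO F : R) c K :
  a = 1 - kR^-1 -> kR != 0 -> 0 < kR -> 0 <= a -> 0 <= e c ->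
  (forall l, (c + l < K)%N ->
     a * e (c + l)%N + kR^-1 * (a^+l * (a^+c * F + fO - F)) <= e (c + l).+1) ->
  forall j, (c + j.+1 <= K)%N ->
   (j.+1)%:R / kR * a^+j * fO - (j.+1)%:R / kR * (a^+j - a^+(c + j)) * F <= e (c + j.+1)%N.
Proof.
move=> Ha k0 kp a0 ec H; elim=> [|j IH] hj.
  have H1 := H 0%N; rewrite addn0 in H1; rewrite addn1 in hj *.
  have {}H1 := H1 hj.
  have H2 : 0 <= a * e c by apply: mulr_ge0.
  rewrite addn0. have -> : (1%:R / kR * a ^+ 0 * fO - 1%:R / kR * (a ^+ 0 - a ^+ c) * F)
     = kR^-1 * (a ^+ 0 * (a ^+ c * F + fO - F)) by rewrite expr0; field.
  lra.
have hj' : (c + j.+1 <= K)%N by lia.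
have H2 := ler_wpM2l a0 (IH hj').
have H1 := H j.+1; rewrite addnS in hj; have {}H1 := H1 hj.
rewrite -addnS in H1 *.
set L := (X in X <= _).
have -> : L = a * ((j.+1)%:R / kR * a^+j * fO - (j.+1)%:R / kR * (a^+j - a^+(c + j)) * F)
              + kR^-1 * (a^+j.+1 * (a^+c * F + fO - F)).
  rewrite /L addnS !exprS exprD; move: (a ^+ j) (a ^+ c) => p q.
  rewrite !mulrS Ha; field => //.
lra.
Qed.

End Alg.

Theorem mainTheorem5 (R : archiRealFieldType) (T : finType)
  (f : {set T} -> R) (k : nat) (ts : R) (c : nat) (Z : {set T})
  (sel : seq T -> {set T}) (OPT : {set T}) :
  nonneg_fun f -> submodular f ->
  (0 < k)%N ->
  0 <= ts <= 1 ->
  (c : int) = Num.ceil (ts * k%:R) ->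
  (exists D : {set T}, [/\ D \subset ~: Z, (2 * k <= #|D|)%N &
                           forall d, d \in D -> dummy f d]) ->
  grg_selector f k c Z sel ->
  (#|OPT| <= k)%N -> (forall S : {set T}, (#|S| <= k)%N -> f S <= f OPT) ->
  let alpha := 1 - (k%:R)^-1 : R in
  (forall i : nat, (1 <= i <= c)%N ->
     grg_E f k sel i >=
       (1 - alpha ^+ i) * f (OPT :\: Z)
       - (1 - alpha ^+ i - i%:R / k%:R * alpha ^+ i.-1) * f (OPT :|: Z)
       + alpha ^+ i * f set0) /\
  (forall i : nat, (c.+1 <= i <= k)%N ->
     grg_E f k sel i >=
       (i - c)%:R / k%:R * alpha ^+ (i - c).-1 * f OPT
       - (i - c)%:R / k%:R * (alpha ^+ (i - c).-1 - alpha ^+ i.-1) * f (OPT :|: Z)).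
Proof.
move=> fnn fsub kpos /andP[ts0 ts1] hc [D [DZ Dcard Ddum]] Hsel cO _ alpha.
have ha : alpha = 1 - (k%:R)^-1 by [].
clearbody alpha.
have ck : (c <= k)%N.
  have : (c : int) <= k%:Z.
    rewrite hc ceil_le_int -pmulrn.
    by rewrite -[X in _ <= X]mul1r ler_wpM2r ?ler0n.
  by rewrite lez_nat.
have k0 := kR0 R k kpos.
have kp := kRgt0 R k kpos.
have a0 : 0 <= alpha by rewrite ha; apply: a_ge0.
set e := fun j => Ex R T k sel j [::] (fS R T f).
have gE : forall i, grg_E f k sel i = e i by move=> i; rewrite /grg_E grg_exp_Ex.
split.
  move=> i /andP[_ ic]; rewrite gE.
  apply: (@part1_alg R e alpha k%:R (f (OPT :\: Z)) (f (OPT :|: Z)) (f set0) c ha k0 a0 _ _ i ic).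
    by rewrite /e /= /fS (setof_nil T).
  move=> j jc; rewrite ha.
  exact: (@phase1_rec _ _ _ _ _ _ _ _ fsub fnn kpos Hsel DZ Dcard Ddum OPT j cO jc (leq_trans jc ck)).
move=> i /andP[ci ik]; rewrite gE.
have ei : i = (c + ((i - c).-1).+1)%N by lia.
move: ((i - c).-1) ei => j ei; rewrite ei.
rewrite addKn /=.
have -> : (c + j.+1).-1 = (c + j)%N by rewrite addnS.
apply: (@part2_alg R e alpha k%:R (f OPT) (f (OPT :|: Z)) c k ha k0 kp a0 _ _ j).
- exact: (@Ex_ge0 _ _ _ _ _ _ _ fnn kpos Hsel c ck).
- move=> l cl.
  have P2 := @phase2_rec _ _ _ _ _ _ _ _ fsub kpos Hsel DZ Dcard Ddum OPT (c + l) cO (leq_addr _ _) cl.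
  have PB := @phase2_base _ _ _ _ _ _ _ _ fsub fnn kpos Hsel DZ Dcard OPT ck.
  have PF := @F1gen _ _ _ _ _ _ _ _ fsub fnn kpos Hsel DZ Dcard OPT c l (ltnW cl).
  rewrite -ha in P2 PB PF.
  have H1 : alpha ^+ l * (alpha ^+ c * f (OPT :|: Z) + f OPT - f (OPT :|: Z))
            <= alpha ^+ l * Ex R T k sel c [::] (gW R T f OPT).
    by apply: ler_wpM2l; rewrite ?exprn_ge0.
  have H2 : (k%:R)^-1 * (alpha ^+ l * (alpha ^+ c * f (OPT :|: Z) + f OPT - f (OPT :|: Z)))
            <= (k%:R)^-1 * Ex R T k sel (c + l) [::] (gW R T f OPT).
    by apply: ler_wpM2l; rewrite ?invr_ge0 ?ler0n //; apply: le_trans PF.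
  rewrite /e; lra.
- by rewrite -ei.
Qed.
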